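(* Let $G$ be a finite group and let $G=G_+G_-$ and $G=G_+'G_-$ be two unique factorizations with the same subgroup $G_-$. Let $\sigma:G_+\to G_-$ be the map with $G_+'=\{\sigma(u)u: u\in G_+\}$ (such a map exists and is unique). Define the linear map $\phi:H(G;G_+',G_-)\to H(G;G_+,G_-)$ by $\phi\{\sigma(u)ux\}'=\{ux\}$ for $u\in G_+$, $x\in G_-$, and \[ T=\sum_{u,v\in G_+}\{u\,\sigma(v)\}\otimes\{v\}\in H(G;G_+,G_-)\otimes H(G;G_+,G_-). \] Then $(\phi,T)$ is a quasi-isomorphism of Hopf algebras from $H(G;G_+',G_-)$ to $H(G;G_+,G_-)$.
   Context: A unique factorization $G=K G_-$ consists of subgroups $K,G_-$ such that every $g\in G$ is uniquely $g=g_Kg_-$ with $g_K\in K$, $g_-\in G_-$; for $u\in K$, $x\in G_-$ define ${}^u x\in G_-$, $u^x\in K$ by $ux=({}^u x)(u^x)$. $H(G;K,G_-)$ is the complex vector space with basis $G$ and Hopf algebra structure: $\{g\}\{h\}=\delta_{g_K^{\,g_-},\,h_K}\{g h_-\}$; unit $1=\sum_{u\in K}\{u\}$; $\Delta\{g\}=\sum_{h\in K}\{g_Kh^{-1}({}^{h}g_-)\}\otimes\{h g_-\}$; $\varepsilon\{g\}=\delta_{g_K,e}$; $S\{g\}=\{g^{-1}\}$. The basis element $g$ is written $\{g\}$ in $H(G;G_+,G_-)$ and $\{g\}'$ in $H(G;G_+',G_-)$. A quasi-isomorphism of Hopf algebras from $H'$ to $H$ is a pair $(\phi,T)$ where $\phi:H'\to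 H$ is an algebra isomorphism and $T\in H\otimes H$ is invertible such that $(\phi\otimes\phi)\Delta'(a)=T\,\Delta(\phi(a))\,T^{-1}$ for all $a\in H'$, $(T\otimes 1)(\Delta\otimes\mathrm{id})T=(1\otimes T)(\mathrm{id}\otimes\Delta)T$, and $(\varepsilon\otimes\mathrm{id})T=(\mathrm{id}\otimes\varepsilon)T=1$. *)

(* Defs.v *)
(* The finite group G is the whole carrier of a finGroupType gT;
   Hopf algebra elements are coefficient functions (over algC) on the basis G. *)
From HB Require Import structures.
From mathcomp Require Import all_boot all_algebra all_fingroup all_field.
Set Implicit Arguments. Unset Strict Implicit. Unset Printing Implicit Defensive.
Import GRing.Theory.
Local Open Scope ring_scope.

Section HopfFact.
Variable gT : finGroupType.

Definition unique_fact (K M : {set gT}) : Prop :=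
  forall g : gT, exists! km : gT * gT,
    [/\ km.1 \in K, km.2 \in M & g = (km.1 * km.2)%g].

Definition fK (K M : {set gT}) (g : gT) : gT :=
  odflt 1%g [pick k in K | (k^-1 * g)%g \in M].
Definition fM (K M : {set gT}) (g : gT) : gT := ((fK K M g)^-1 * g)%g.

(* u x = (^u x) (u^x) with ^u x in M, u^x in K *)
Definition lact (K M : {set gT}) (u x : gT) : gT := ((fM K M ((u * x)^-1))^-1)%g.
Definition ract (K M : {set gT}) (u x : gT) : gT := ((fK K M ((u * x)^-1))^-1)%g.

Definition HA := {ffun gT -> algC}.
Definition HA2 := {ffun gT * gT -> algC}.
Definition HA3 := {ffun gT * gT * gT -> algC}.

(* structure constants: {g}{h} = delta_{g_K^{g_-}, h_K} {g h_-} *)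
Definition mulc (K M : {set gT}) (g h z : gT) : algC :=
  ((ract K M (fK K M g) (fM K M g) == fK K M h) && ((g * fM K M h)%g == z))%:R.

Definition mulH (K M : {set gT}) (a b : HA) : HA :=
  [ffun z => \sum_(g : gT) \sum_(h : gT) a g * b h * mulc K M g h z].
Definition unitH (K : {set gT}) : HA := [ffun g => (g \in K)%:R].

Definition mulH2 (K M : {set gT}) (A B : HA2) : HA2 :=
  [ffun z => \sum_(p : gT * gT) \sum_(q : gT * gT)
     A p * B q * mulc K M p.1 q.1 z.1 * mulc K M p.2 q.2 z.2].
Definition unitH2 (K : {set gT}) : HA2 := [ffun z => unitH K z.1 * unitH K z.2].
Definition mulH3 (K M : {set gT}) (A B : HA3) : HA3 :=
  [ffun z => \sum_(p : gT * gT * gT) \sum_(q : gT * gT * gT)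
     A p * B q * mulc K M p.1.1 q.1.1 z.1.1 * mulc K M p.1.2 q.1.2 z.1.2
       * mulc K M p.2 q.2 z.2].

Definition comulc (K M : {set gT}) (g : gT) (p : gT * gT) : algC :=
  \sum_(h in K) (p == ((fK K M g * h^-1 * lact K M h (fM K M g))%g,
                       (h * fM K M g)%g))%:R.
Definition comulH (K M : {set gT}) (a : HA) : HA2 :=
  [ffun p => \sum_(g : gT) a g * comulc K M g p].
Definition counitc (K M : {set gT}) (g : gT) : algC := (fK K M g == 1%g)%:R.

Definition basisH (g : gT) : HA := [ffun x => (x == g)%:R].
Definition mapH2 (f : HA -> HA) (A : HA2) : HA2 :=
  [ffun z => \sum_(p : gT * gT) A p * f (basisH p.1) z.1 * f (basisH p.2) z.2].

(* (Delta (x) id) T, (id (x) Delta) T, T (x) 1, 1 (x) T, (eps (x) id) T, (id (x) eps) T *)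
Definition comul_l (K M : {set gT}) (T : HA2) : HA3 :=
  [ffun z => \sum_(g : gT) T (g, z.2) * comulc K M g z.1].
Definition comul_r (K M : {set gT}) (T : HA2) : HA3 :=
  [ffun z => \sum_(g : gT) T (z.1.1, g) * comulc K M g (z.1.2, z.2)].
Definition tens_r1 (K : {set gT}) (T : HA2) : HA3 := [ffun z => T z.1 * unitH K z.2].
Definition tens_1l (K : {set gT}) (T : HA2) : HA3 :=
  [ffun z => unitH K z.1.1 * T (z.1.2, z.2)].
Definition counit_l (K M : {set gT}) (T : HA2) : HA :=
  [ffun h => \sum_(g : gT) T (g, h) * counitc K M g].
Definition counit_r (K M : {set gT}) (T : HA2) : HA :=
  [ffun g => \sum_(h : gT) T (g, h) * counitc K M h].

Definition quasi_iso (K' K M : {set gT}) (phi : HA -> HA) (T : HA2) : Prop :=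
  [/\
      [/\ (forall (c : algC) (a b : HA),
         phi [ffun x => c * a x + b x] = [ffun x => c * phi a x + phi b x]),
      bijective phi,
      (forall a b, phi (mulH K' M a b) = mulH K M (phi a) (phi b)) &
      phi (unitH K') = unitH K],
      (exists Tinv : HA2,
         [/\ mulH2 K M T Tinv = unitH2 K, mulH2 K M Tinv T = unitH2 K &
             forall a : HA, mapH2 phi (comulH K' M a)
                            = mulH2 K M (mulH2 K M T (comulH K M (phi a))) Tinv]),
      mulH3 K M (tens_r1 K T) (comul_l K M T) = mulH3 K M (tens_1l K T) (comul_r K M T)
    & counit_l K M T = unitH K /\ counit_r K M T = unitH K].

(* phi{sigma(u) u x}' = {u x}, i.e. (phi a)(g) = a(sigma(g_K) g) *)
Definition phiS (K M : {set gT}) (sigma : gT -> gT) (a : HA) : HA :=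
  [ffun g => a (sigma (fK K M g) * g)%g].
Definition TS (K : {set gT}) (sigma : gT -> gT) : HA2 :=
  [ffun p => \sum_(u in K) \sum_(v in K) (p == ((u * sigma v)%g, v))%:R].

End HopfFact.

(* Main.v *)
Require Import Defs.
From HB Require Import structures.
From mathcomp Require Import all_boot all_algebra all_fingroup all_field.
Require Import Defs.
Set Implicit Arguments. Unset Strict Implicit. Unset Printing Implicit Defensive.
Import GRing.Theory.

Section Gen.
Variable gT : finGroupType.
Local Open Scope group_scope.

Section UF.
Variables (K M : {group gT}).
Hypothesis uf : unique_fact K M.

Lemma uf_uniq u x v y : u \in K -> x \in M -> v \in K -> y \in M ->
  u * x = v * y -> u = v /\ x = y.
Proof.
move=> uK xM vK yM e.
have [[a b] [_ U]] := uf (u * x).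
have h1 := U (u, x) (And3 uK xM erefl).
have h2 := U (v, y) (And3 vK yM e).
by rewrite h1 in h2; case: h2.
Qed.

Lemma uf_ex g : exists u x, [/\ u \in K, x \in M & g = u * x].
Proof. by have [[a b] [[/= aK bM ->] _]] := uf g; exists a, b. Qed.

Lemma fK_mul u x : u \in K -> x \in M -> fK K M (u * x) = u.
Proof.
move=> uK xM; rewrite /fK; case: pickP => [k /andP[kK kM] | /(_ u)] /=.
  have e : u * x = k * (k^-1 * (u * x)) by rewrite mulKVg.
  by case: (uf_uniq uK xM kK kM e).
by rewrite uK mulKg xM.
Qed.

Lemma fM_mul u x : u \in K -> x \in M -> fM K M (u * x) = x.
Proof. by move=> uK xM; rewrite /fM fK_mul // mulKg. Qed.

Lemma fK_in g : fK K M g \in K.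
Proof. by have [u [x [uK xM ->]]] := uf_ex g; rewrite fK_mul. Qed.
Lemma fM_in g : fM K M g \in M.
Proof. by have [u [x [uK xM ->]]] := uf_ex g; rewrite fM_mul. Qed.
Lemma fKM g : fK K M g * fM K M g = g.
Proof. by rewrite /fM mulKVg. Qed.

Lemma KM1 u : u \in K -> u \in M -> u = 1.
Proof.
move=> uK uM; have e : u * 1 = 1 * u by rewrite mulg1 mul1g.
by case: (uf_uniq uK (group1 M) (group1 K) uM e).
Qed.

Lemma lr_in u x : [/\ lact K M u x \in M, ract K M u x \in K &
   u * x = lact K M u x * ract K M u x].
Proof.
rewrite /lact /Defs.ract; split; rewrite ?groupV ?fM_in ?fK_in //.
by rewrite -invgM fKM invgK.
Qed.

Lemma lr_uniq u x m k : m \in M -> k \in K -> u * x = m * k ->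
  lact K M u x = m /\ ract K M u x = k.
Proof.
move=> mM kK e.
change ((fM K M ((u * x)^-1))^-1 = m /\ (fK K M ((u * x)^-1))^-1 = k).
rewrite e [(m * k)^-1]invgM.
by rewrite (fM_mul (groupVr kK) (groupVr mM)) (fK_mul (groupVr kK) (groupVr mM)) !invgK.
Qed.

Lemma mk_uniq m k m' k' : m \in M -> k \in K -> m' \in M -> k' \in K ->
  m * k = m' * k' -> m = m' /\ k = k'.
Proof.
move=> mM kK m'M k'K e.
have e' : k^-1 * m^-1 = k'^-1 * m'^-1 by rewrite -!invgM e.
have [e1 e2] := uf_uniq (groupVr kK) (groupVr mM) (groupVr k'K) (groupVr m'M) e'.
by split; apply: invg_inj.
Qed.

Lemma ract1 u : u \in K -> ract K M u 1 = u.
Proof.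
move=> uK; have e : u * 1 = 1 * u by rewrite mulg1 mul1g.
by case: (lr_uniq (group1 M) uK e).
Qed.

Lemma lact1 u : u \in K -> lact K M u 1 = 1.
Proof.
move=> uK; have e : u * 1 = 1 * u by rewrite mulg1 mul1g.
by case: (lr_uniq (group1 M) uK e).
Qed.

Lemma ract_inj u v y : u \in K -> v \in K -> y \in M ->
  ract K M u y = ract K M v y -> u = v.
Proof.
move=> uK vK yM e.
have [l1M r1K e1] := lr_in u y; have [l2M r2K e2] := lr_in v y.
have E : u * v^-1 = lact K M u y * (lact K M v y)^-1.
  have -> : u * v^-1 = (u * y) * (v * y)^-1 by rewrite invgM mulgA mulgK.
  by rewrite e1 e2 e invgM mulgA mulgK.
have h : u * v^-1 = 1.
  apply: KM1; first by rewrite groupM ?groupV.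
  by rewrite E groupM ?groupV ?fM_in.
by rewrite -(mulgVK v u) h mul1g.
Qed.

End UF.

Section UFalg.
Local Open Scope ring_scope.
Variables (K M : {group gT}).
Hypothesis uf : unique_fact K M.

Lemma mulcE u x v y z : u \in K -> x \in M -> v \in K -> y \in M ->
  mulc K M (u * x)%g (v * y)%g z = ((ract K M u x == v) && ((u * x * y)%g == z))%:R.
Proof.
move=> uK xM vK yM.
by rewrite /mulc (fK_mul uf uK xM) (fM_mul uf uK xM) (fK_mul uf vK yM) (fM_mul uf vK yM).
Qed.

Lemma mulcE_1r u x v z : u \in K -> x \in M -> v \in K ->
  mulc K M (u * x)%g v z = ((ract K M u x == v) && ((u * x)%g == z))%:R.
Proof.
move=> uK xM vK; have := mulcE z uK xM vK (group1 M).
by rewrite !mulg1.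
Qed.

Lemma mulcE_1l u v y z : u \in K -> v \in K -> y \in M ->
  mulc K M u (v * y)%g z = ((u == v) && ((u * y)%g == z))%:R.
Proof.
move=> uK vK yM; have := mulcE z uK (group1 M) vK yM.
by rewrite !mulg1 (ract1 uf uK).
Qed.

Lemma mulcE_11 u v z : u \in K -> v \in K ->
  mulc K M u v z = ((u == v) && (u == z))%:R.
Proof.
move=> uK vK; have := mulcE z uK (group1 M) vK (group1 M).
by rewrite !mulg1 (ract1 uf uK).
Qed.

Lemma comulcE u x p : u \in K -> x \in M ->
  comulc K M (u * x)%g p =
  \sum_(h in K) (p == ((u * h^-1 * lact K M h x)%g, (h * x)%g))%:R.
Proof. by move=> uK xM; rewrite /comulc (fK_mul uf uK xM) (fM_mul uf uK xM). Qed.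

Lemma comulcE1 v p : v \in K ->
  comulc K M v p = \sum_(h in K) (p == ((v * h^-1)%g, h))%:R.
Proof.
move=> vK; have := comulcE p vK (group1 M); rewrite mulg1 => ->.
by apply: eq_bigr => h hK; rewrite (lact1 uf hK) !mulg1.
Qed.

Lemma counitcE u x : u \in K -> x \in M -> counitc K M (u * x)%g = (u == 1%g)%:R.
Proof. by move=> uK xM; rewrite /counitc (fK_mul uf uK xM). Qed.

Lemma counitcE1 u : u \in K -> counitc K M u = (u == 1%g)%:R.
Proof. by move=> uK; have := counitcE uK (group1 M); rewrite mulg1. Qed.

End UFalg.
End Gen.

Section Sums.
Local Open Scope ring_scope.

Lemma mulRb (a b : bool) : (a%:R * b%:R : algC) = (a && b)%:R.
Proof. by case: a; case: b; rewrite ?mulr0 ?mulr1. Qed.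

Lemma sum_b (T : finType) (A : {pred T}) (P : pred T) (e : T) :
  (forall i, i \in A -> P i -> i = e) ->
  \sum_(i in A) (P i)%:R = ((e \in A) && P e)%:R :> algC.
Proof.
move=> H; case: (boolP ((e \in A) && P e)) => [/andP[eA Pe] | N].
  rewrite (bigD1 e) //= Pe big1 ?addr0 // => i /andP[iA ne].
  by case: (boolP (P i)) => // Pi; rewrite (H i iA Pi) eqxx in ne.
rewrite big1 // => i iA; case: (boolP (P i)) => // Pi.
by move: N; rewrite -(H i iA Pi) iA Pi.
Qed.

Lemma sum_bT (T : finType) (P : pred T) (e : T) :
  (forall i, P i -> i = e) -> \sum_i (P i)%:R = (P e)%:R :> algC.
Proof.
move=> H; case: (boolP (P e)) => [Pe | N].
  rewrite (bigD1 e) //= Pe big1 ?addr0 // => i ne.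
  by case: (boolP (P i)) => // Pi; rewrite (H i Pi) eqxx in ne.
rewrite big1 // => i _; case: (boolP (P i)) => // Pi.
by move: N; rewrite -(H i Pi) Pi.
Qed.

End Sums.

Section Main.
Variables (gT : finGroupType) (K K' M : {group gT}) (s : gT -> gT).
Hypotheses (uf : unique_fact K M) (uf' : unique_fact K' M)
  (sM : forall u, u \in K -> s u \in M)
  (eK' : (K' : {set gT}) = [set (s u * u)%g | u in K]).
Local Open Scope group_scope.

Lemma sK' u : u \in K -> s u * u \in K'.
Proof. by move=> uK; rewrite eK'; apply/imsetP; exists u. Qed.

Lemma K'P k : k \in K' -> exists2 u, u \in K & k = s u * u.
Proof. by rewrite eK' => /imsetP. Qed.

Lemma sinj u v : u \in K -> v \in K -> s u * u = s v * v -> u = v.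
Proof. by move=> uK vK e; case: (mk_uniq uf (sM uK) uK (sM vK) vK e). Qed.

Lemma s1 : s 1 = 1.
Proof.
apply: (KM1 uf'); last exact: sM.
by have := sK' (group1 K); rewrite mulg1.
Qed.

Definition beta g := s (fK K M g) * g.

Lemma betaE u x : u \in K -> x \in M -> beta (u * x) = s u * u * x.
Proof. by move=> uK xM; rewrite /beta (fK_mul uf uK xM) mulgA. Qed.

Lemma beta_inj : injective beta.
Proof.
move=> g h.
have [u [x [uK xM ->]]] := uf_ex uf g; have [v [y [vK yM ->]]] := uf_ex uf h.
rewrite !betaE // => e.
case: (uf_uniq uf' (sK' uK) xM (sK' vK) yM e) => /(sinj uK vK) -> ->. done.
Qed.

Lemma lr'E u x : u \in K -> x \in M ->
  ract K' M (s u * u) x = s (ract K M u x) * ract K M u x /\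
  lact K' M (s u * u) x = s u * lact K M u x * (s (ract K M u x))^-1.
Proof.
move=> uK xM; have [lM rK e] := lr_in uf u x.
have [] := lr_uniq uf' (u := s u * u) (x := x)
  (m := s u * lact K M u x * (s (ract K M u x))^-1) (k := s (ract K M u x) * ract K M u x).
- by rewrite groupM ?groupV ?sM // groupM ?sM.
- exact: sK'.
- by rewrite -[in RHS]mulgA mulKg -!mulgA -e.
by move=> -> ->.
Qed.

Lemma cocycle h v : h \in K -> v \in K ->
  s h * lact K M h (s v) = s (ract K M h (s v) * v).
Proof.
move=> hK vK; have [lM rK e] := lr_in uf h (s v).
have : s h * h * (s v * v) \in K' by rewrite groupM ?sK'.
case/K'P=> w wK ew.
have e2 : (s h * lact K M h (s v)) * (ract K M h (s v) * v) = s w * w.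
  by rewrite -ew !mulgA -[s h * h * s v]mulgA e !mulgA.
have [] := mk_uniq uf _ _ (sM wK) wK e2.
- by rewrite groupM ?sM.
- by rewrite groupM.
by move=> -> ->.
Qed.


Local Open Scope ring_scope.

Lemma phi_lin (c : algC) (a b : HA gT) :
  phiS K M s [ffun x => c * a x + b x] = [ffun x => c * phiS K M s a x + phiS K M s b x].
Proof. by apply/ffunP => g; rewrite !ffunE. Qed.

Lemma phi_bij : bijective (phiS K M s).
Proof.
pose bi := invF beta_inj.
exists (fun a : HA gT => [ffun g => a (bi g)]) => a; apply/ffunP => g; rewrite !ffunE.
  by rewrite -[X in _ = a X](f_invF beta_inj g).
exact: (congr1 a (invF_f beta_inj g)).
Qed.

Lemma mulc_beta g h z : mulc K' M (beta g) (beta h) (beta z) = mulc K M g h z.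
Proof.
have [u [x [uK xM ->]]] := uf_ex uf g; have [v [y [vK yM ->]]] := uf_ex uf h.
rewrite !betaE // (mulcE uf' _ (sK' uK) xM (sK' vK) yM) (mulcE uf _ uK xM vK yM).
have [-> _] := lr'E uK xM.
have -> : (s u * u * x * y = beta (u * (x * y)))%g by rewrite betaE ?groupM // !mulgA.
rewrite inj_eq; last exact: beta_inj.
rewrite !mulgA; congr ((_ && _)%:R).
have [_ rK _] := lr_in uf u x.
by apply/eqP/eqP => [/(sinj rK vK) | ->].
Qed.

Lemma phi_mul a b : phiS K M s (mulH K' M a b) = mulH K M (phiS K M s a) (phiS K M s b).
Proof.
apply/ffunP => z; rewrite !ffunE.
rewrite (reindex_inj beta_inj); apply: eq_bigr => g _.
rewrite (reindex_inj beta_inj); apply: eq_bigr => h _.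
by rewrite !ffunE -[(s (fK K M z) * z)%g]/(beta z) mulc_beta.
Qed.

Lemma inK_mul u x : u \in K -> x \in M -> ((u * x)%g \in K) = (x == 1%g).
Proof.
move=> uK xM; apply/idP/eqP => [ux | ->]; last by rewrite mulg1.
have e : (u * x = (u * x) * 1)%g by rewrite mulg1.
by case: (uf_uniq uf uK xM ux (group1 M) e).
Qed.

Lemma inK'_mul u x : u \in K -> x \in M -> ((s u * u * x)%g \in K') = (x == 1%g).
Proof.
move=> uK xM; apply/idP/eqP => [ux | ->]; last by rewrite mulg1 sK'.
have e : (s u * u * x = (s u * u * x) * 1)%g by rewrite mulg1.
by case: (uf_uniq uf' (sK' uK) xM ux (group1 M) e).
Qed.

Lemma phi_unit : phiS K M s (unitH K') = unitH K.
Proof.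
apply/ffunP => g; rewrite !ffunE -[(s (fK K M g) * g)%g]/(beta g).
have [u [x [uK xM ->]]] := uf_ex uf g.
by rewrite betaE // inK'_mul // inK_mul.
Qed.


Lemma sumTS (tau : gT -> gT) (F : gT * gT -> algC) :
  \sum_p TS K tau p * F p = \sum_(u in K) \sum_(v in K) F ((u * tau v)%g, v).
Proof.
transitivity (\sum_p \sum_(u in K) \sum_(v in K) ((p == ((u * tau v)%g, v))%:R * F p)).
  apply: eq_bigr => p _; rewrite ffunE mulr_suml; apply: eq_bigr => u _.
  by rewrite mulr_suml.
rewrite exchange_big; apply: eq_bigr => u _; rewrite exchange_big.
apply: eq_bigr => v _.
rewrite (bigD1 ((u * tau v)%g, v)) //= eqxx mul1r big1 ?addr0 // => p /negbTE ->.
by rewrite mul0r.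
Qed.

Lemma mulH2E (A B : HA2 gT) z : mulH2 K M A B z =
  \sum_p A p * \sum_q B q * (mulc K M p.1 q.1 z.1 * mulc K M p.2 q.2 z.2).
Proof.
rewrite ffunE; apply: eq_bigr => p _; rewrite mulr_sumr; apply: eq_bigr => q _.
by rewrite !mulrA.
Qed.

Lemma TT (t1 t2 : gT -> gT) : (forall v, v \in K -> t1 v \in M) ->
  (forall v, v \in K -> t2 v \in M) -> (forall v, v \in K -> (t1 v * t2 v = 1)%g) ->
  mulH2 K M (TS K t1) (TS K t2) = unitH2 K.
Proof.
move=> H1 H2 H; apply/ffunP => -[z1 z2]; rewrite mulH2E sumTS !ffunE /=.
under eq_bigr => u _ do under eq_bigr => v _ do rewrite sumTS /=.
have inner u v : u \in K -> v \in K ->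
  \sum_(u' in K) \sum_(v' in K) (mulc K M (u * t1 v)%g (u' * t2 v')%g z1 * mulc K M v v' z2)
  = ((u == z1) && (v == z2))%:R.
  move=> uK vK.
  transitivity (\sum_(u' in K) (((ract K M u (t1 v) == u') && ((u == z1) && (v == z2)))%:R : algC)).
    apply: eq_bigr => u' u'K.
    pose P v' := (((ract K M u (t1 v) == u') && ((u * t1 v * t2 v')%g == z1))
                  && ((v == v') && (v == z2))).
    rewrite (eq_bigr (fun v' => ((P v')%:R : algC))); last first.
      by move=> v' v'K; rewrite (mulcE uf _ uK (H1 _ vK) u'K (H2 _ v'K)) (mulcE_11 uf _ vK v'K) mulRb.
    rewrite (sum_b (e := v)); last by move=> v' _ /andP[_ /andP[/eqP]].
    rewrite /P vK eqxx -mulgA H // mulg1 /=.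
    by case: (_ == u'); case: (u == z1).
  rewrite (sum_b (e := ract K M u (t1 v))); last by move=> i _ /andP[/eqP].
  by have [_ -> _] := lr_in uf u (t1 v); rewrite eqxx.
rewrite (eq_bigr (fun u => \sum_(v in K) (((u == z1) && (v == z2))%:R : algC))); last first.
  by move=> u uK; apply: eq_bigr => v vK; apply: inner.
rewrite (eq_bigr (fun u => (((z2 \in K) && (u == z1))%:R : algC))); last first.
  move=> u _; rewrite (sum_b (e := z2)); last by move=> i _ /andP[_ /eqP].
  by rewrite eqxx andbT.
rewrite (sum_b (e := z1)); last by move=> i _ /andP[_ /eqP].
by rewrite eqxx mulRb andbT.
Qed.


Lemma sumT1 (tau : gT -> gT) (F : gT -> algC) h :
  \sum_g TS K tau (g, h) * F g = \sum_(u in K) \sum_(v in K) ((h == v)%:R * F (u * tau v)%g).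
Proof.
transitivity (\sum_g \sum_(u in K) \sum_(v in K) (((g, h) == ((u * tau v)%g, v))%:R * F g)).
  apply: eq_bigr => g _; rewrite ffunE mulr_suml; apply: eq_bigr => u _.
  by rewrite mulr_suml.
rewrite exchange_big; apply: eq_bigr => u _; rewrite exchange_big.
apply: eq_bigr => v _.
rewrite (bigD1 (u * tau v)%g) //= xpair_eqE eqxx /= big1 ?addr0 // => g /negbTE ne.
by rewrite xpair_eqE ne mul0r.
Qed.

Lemma sumT2 (tau : gT -> gT) (F : gT -> algC) g :
  \sum_h TS K tau (g, h) * F h = \sum_(u in K) \sum_(v in K) ((g == u * tau v)%g%:R * F v).
Proof.
transitivity (\sum_h \sum_(u in K) \sum_(v in K) (((g, h) == ((u * tau v)%g, v))%:R * F h)).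
  apply: eq_bigr => h _; rewrite ffunE mulr_suml; apply: eq_bigr => u _.
  by rewrite mulr_suml.
rewrite exchange_big; apply: eq_bigr => u _; rewrite exchange_big.
apply: eq_bigr => v _.
rewrite (bigD1 v) //= xpair_eqE eqxx andbT big1 ?addr0 // => h /negbTE ne.
by rewrite xpair_eqE ne andbF mul0r.
Qed.

Lemma counitT : counit_l K M (TS K s) = unitH K /\ counit_r K M (TS K s) = unitH K.
Proof.
split; apply/ffunP => h; rewrite !ffunE.
  rewrite sumT1.
  rewrite (eq_bigr (fun u => \sum_(v in K) (((h == v) && (u == 1%g))%:R : algC))); last first.
    move=> u uK; apply: eq_bigr => v vK.
    by rewrite (counitcE uf uK (sM vK)) mulRb.
  rewrite (eq_bigr (fun u => (((h \in K) && (u == 1%g))%:R : algC))); last first.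
    move=> u _; rewrite (sum_b (e := h)); last by move=> i _ /andP[/eqP ->].
    by rewrite eqxx.
  rewrite (sum_b (e := 1%g)); last by move=> i _ /andP[_ /eqP].
  by rewrite group1 eqxx andbT.
rewrite sumT2.
rewrite (eq_bigr (fun u => \sum_(v in K) (((h == u * s v)%g && (v == 1%g))%:R : algC))); last first.
  move=> u uK; apply: eq_bigr => v vK.
  by rewrite (counitcE1 uf vK) mulRb.
rewrite (eq_bigr (fun u => ((h == u)%:R : algC))); last first.
  move=> u _; rewrite (sum_b (e := 1%g)); last by move=> i _ /andP[_ /eqP].
  by rewrite group1 eqxx s1 mulg1 andbT.
rewrite (sum_b (e := h)); last by move=> i _ /eqP ->.
by rewrite eqxx andbT.
Qed.


Lemma sum_delta1 (A : {pred gT}) (f : gT -> gT * gT) (F : gT * gT -> algC) :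
  \sum_q (\sum_(h in A) (q == f h)%:R) * F q = \sum_(h in A) F (f h).
Proof.
transitivity (\sum_q \sum_(h in A) ((q == f h)%:R * F q)).
  by apply: eq_bigr => q _; rewrite mulr_suml.
rewrite exchange_big; apply: eq_bigr => h _.
rewrite (bigD1 (f h)) //= eqxx mul1r big1 ?addr0 // => q /negbTE ->.
by rewrite mul0r.
Qed.

Lemma sum_delta2 (A B : {pred gT}) (c : gT -> gT -> algC) (f : gT -> gT -> gT * gT)
  (F : gT * gT -> algC) :
  \sum_q (\sum_(h in A) \sum_(a in B) c h a * (q == f h a)%:R) * F q
  = \sum_(h in A) \sum_(a in B) c h a * F (f h a).
Proof.
transitivity (\sum_q \sum_(h in A) \sum_(a in B) (c h a * ((q == f h a)%:R * F q))).
  apply: eq_bigr => q _; rewrite mulr_suml; apply: eq_bigr => h _.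
  by rewrite mulr_suml; apply: eq_bigr => a _; rewrite mulrA.
rewrite exchange_big; apply: eq_bigr => h _; rewrite exchange_big.
apply: eq_bigr => a _; rewrite -mulr_sumr; congr (_ * _).
rewrite (bigD1 (f h a)) //= eqxx mul1r big1 ?addr0 // => q /negbTE ->.
by rewrite mul0r.
Qed.

Lemma Ybasis u x w : u \in K -> x \in M ->
  mulH2 K M (TS K s) [ffun q => comulc K M (u * x)%g q] w =
  \sum_(h in K) \sum_(a in K) ((ract K M a (s h) == (u * h^-1)%g)%:R *
        (w == ((a * s h * lact K M h x)%g, (h * x)%g))%:R).
Proof.
move=> uK xM; case: w => w1 w2; rewrite mulH2E sumTS.
under eq_bigr => b1 _ do under eq_bigr => b2 _ do
  (under eq_bigr => q _ do rewrite ffunE (comulcE uf q uK xM); rewrite sum_delta1 /=).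
have E b1 : b1 \in K ->
  \sum_(b2 in K) \sum_(h in K) (mulc K M (b1 * s b2) (u * h^-1 * lact K M h x) w1 *
           mulc K M b2 (h * x) w2) =
  \sum_(h in K) ((ract K M b1 (s h) == (u * h^-1)%g)%:R *
        ((w1, w2) == ((b1 * s h * lact K M h x)%g, (h * x)%g))%:R).
  move=> b1K; rewrite exchange_big; apply: eq_bigr => h hK.
  have [lM _ _] := lr_in uf h x.
  pose P b2 := (((ract K M b1 (s b2) == (u * h^-1)%g) && ((b1 * s b2 * lact K M h x)%g == w1))
     && ((b2 == h) && ((b2 * x)%g == w2))).
  rewrite (eq_bigr (fun b2 => ((P b2)%:R : algC))); last first.
    move=> b2 b2K.
    by rewrite (mulcE uf _ b1K (sM b2K) (groupM uK (groupVr hK)) lM) (mulcE_1l uf _ b2K hK xM) mulRb.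
  rewrite (sum_b (e := h)); last by move=> i _ /andP[_ /andP[/eqP]].
  rewrite /P hK eqxx mulRb xpair_eqE /= [w1 == _]eq_sym [w2 == _]eq_sym.
  by rewrite andbA.
rewrite (eq_bigr _ E).
by rewrite exchange_big.
Qed.


Definition Qb u x z1 z2 h a :=
  (ract K M a (s h) == (u * h^-1)%g) &&
  (((a * (s h * lact K M h x) * (s (ract K M h x))^-1)%g == z1) && ((h * x)%g == z2)).

Lemma Zbasis u x z1 z2 : u \in K -> x \in M ->
  mulH2 K M (mulH2 K M (TS K s) [ffun q => comulc K M (u * x)%g q])
     (TS K (fun v => (s v)^-1)%g) (z1, z2) =
  \sum_(h in K) \sum_(a in K) ((Qb u x z1 z2 h a)%:R : algC).
Proof.
move=> uK xM; rewrite mulH2E.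
under eq_bigr => w _ do rewrite (Ybasis w uK xM).
rewrite sum_delta2; apply: eq_bigr => h hK; apply: eq_bigr => a aK.
rewrite sumTS /=.
have [lM rK _] := lr_in uf h x.
pose P c d := (((ract K M a (s h * lact K M h x) == c) &&
    ((a * (s h * lact K M h x) * (s d)^-1)%g == z1)) &&
    ((ract K M h x == d) && ((h * x)%g == z2))).
rewrite (eq_bigr (fun c => \sum_(d in K) ((P c d)%:R : algC))); last first.
  move=> c cK; apply: eq_bigr => d dK.
  rewrite -[(a * s h * _)%g]mulgA.
  by rewrite (mulcE uf _ aK (groupM (sM hK) lM) cK (groupVr (sM dK))) (mulcE_1r uf _ hK xM dK) mulRb.
rewrite (eq_bigr (fun c => ((P c (ract K M h x))%:R : algC))); last first.
  move=> c _; rewrite (sum_b (e := ract K M h x)); last first.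
    by move=> i _ /andP[_ /andP[/eqP ->]].
  by rewrite rK.
rewrite (sum_b (e := ract K M a (s h * lact K M h x))); last first.
  by move=> i _ /andP[/andP[/eqP ->]].
have [_ rK' _] := lr_in uf a (s h * lact K M h x).
by rewrite mulRb /P /Qb rK' !eqxx /=.
Qed.


Lemma sumK' (F : gT -> algC) : \sum_(h in K') F h = \sum_(h in K) F (s h * h)%g.
Proof.
rewrite eK' big_imset //= => h1 h2 h1K h2K; exact: sinj.
Qed.

Lemma Lbasis u x z1 z2 : u \in K -> x \in M ->
  comulc K' M (beta (u * x)) (beta z1, beta z2) =
  \sum_(h in K) \sum_(a in K) ((Qb u x z1 z2 h a)%:R : algC).
Proof.
move=> uK xM; rewrite betaE // (comulcE uf' _ (sK' uK) xM) sumK'.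
apply: eq_bigr => h hK.
have [_ el'] := lr'E hK xM; rewrite el'.
have [lM rK _] := lr_in uf h x.
have : (s u * u * (s h * h)^-1)%g \in K' by rewrite groupM ?groupV ?sK'.
case/K'P => k kK ek.
have rk : ract K M k (s h) = (u * h^-1)%g.
  have [] := lr_uniq uf (u := k) (x := s h) (m := ((s k)^-1 * s u)%g) (k := (u * h^-1)%g).
  - by rewrite groupM ?groupV ?sM.
  - by rewrite groupM ?groupV.
  - rewrite -[k in LHS](mulKg (s k)) -ek invgM !mulgA.
    by rewrite mulgVK.
  by [].
rewrite (sum_b (e := k)); last first.
  move=> i iK /andP[/eqP ri _]; apply: (ract_inj uf iK kK (sM hK)).
  by rewrite ri rk.
have mM : (s h * lact K M h x * (s (ract K M h x))^-1)%g \in M.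
  by apply: groupM; [apply: groupM; [exact: sM | exact: lM] | rewrite groupV; exact: sM].
rewrite ek -(betaE kK mM) -(betaE hK xM) xpair_eqE !(inj_eq beta_inj).
by rewrite /Qb kK rk eqxx /= !mulgA [z1 == _]eq_sym [z2 == _]eq_sym.
Qed.


Lemma lin1 (A : HA2 gT) (c : gT -> algC) (B : gT -> HA2 gT) z :
  mulH2 K M A [ffun q => \sum_g c g * B g q] z = \sum_g c g * mulH2 K M A (B g) z.
Proof.
rewrite ffunE.
transitivity (\sum_p \sum_q \sum_g (c g * (A p * B g q * mulc K M p.1 q.1 z.1 * mulc K M p.2 q.2 z.2))).
  apply: eq_bigr => p _; apply: eq_bigr => q _.
  rewrite ffunE mulr_sumr !mulr_suml; apply: eq_bigr => g _.
  by rewrite !mulrA [A p * c g]mulrC.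
under eq_bigr => p _ do rewrite exchange_big.
rewrite exchange_big; apply: eq_bigr => g _.
rewrite ffunE mulr_sumr; apply: eq_bigr => p _.
by rewrite mulr_sumr.
Qed.

Lemma lin2 (B : HA2 gT) (c : gT -> algC) (A : gT -> HA2 gT) z :
  mulH2 K M [ffun p => \sum_g c g * A g p] B z = \sum_g c g * mulH2 K M (A g) B z.
Proof.
rewrite ffunE.
transitivity (\sum_p \sum_q \sum_g (c g * (A g p * B q * mulc K M p.1 q.1 z.1 * mulc K M p.2 q.2 z.2))).
  apply: eq_bigr => p _; apply: eq_bigr => q _.
  rewrite ffunE !mulr_suml; apply: eq_bigr => g _.
  by rewrite !mulrA.
under eq_bigr => p _ do rewrite exchange_big.
rewrite exchange_big; apply: eq_bigr => g _.
rewrite ffunE mulr_sumr; apply: eq_bigr => p _.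
by rewrite mulr_sumr.
Qed.

Lemma conjT (a : HA gT) :
  mapH2 (phiS K M s) (comulH K' M a) =
  mulH2 K M (mulH2 K M (TS K s) (comulH K M (phiS K M s a))) (TS K (fun v => (s v)^-1)%g).
Proof.
apply/ffunP => -[z1 z2].
transitivity (\sum_g a (beta g) * comulc K' M (beta g) (beta z1, beta z2)).
  rewrite ffunE (bigD1 (beta z1, beta z2)) //= big1 ?addr0.
    rewrite !ffunE -[(s (fK K M z1) * z1)%g]/(beta z1) -[(s (fK K M z2) * z2)%g]/(beta z2).
    rewrite !eqxx !mulr1 (reindex_inj beta_inj) /=.
    by [].
  move=> [p1 p2] /=; rewrite xpair_eqE negb_and !ffunE.
  rewrite -[(s (fK K M z1) * z1)%g]/(beta z1) -[(s (fK K M z2) * z2)%g]/(beta z2).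
  rewrite (eq_sym (beta z1)) (eq_sym (beta z2)).
  by case/orP => /negbTE ne; rewrite ne ?mulr0 ?mul0r.
have -> : comulH K M (phiS K M s a) =
    [ffun q => \sum_g a (beta g) * [ffun q => comulc K M g q] q].
  by apply/ffunP => q; rewrite !ffunE; apply: eq_bigr => g _; rewrite !ffunE.
have -> : mulH2 K M (TS K s) [ffun q => \sum_g a (beta g) * [ffun q => comulc K M g q] q] =
    [ffun w => \sum_g a (beta g) * mulH2 K M (TS K s) [ffun q => comulc K M g q] w].
  by apply/ffunP => w; rewrite lin1 ffunE.
rewrite lin2; apply: eq_bigr => g _; congr (_ * _).
have [u [x [uK xM ->]]] := uf_ex uf g.
by rewrite Lbasis // Zbasis.
Qed.


Definition m3 (p q z : (gT * gT) * gT) : algC :=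
  mulc K M p.1.1 q.1.1 z.1.1 * mulc K M p.1.2 q.1.2 z.1.2 * mulc K M p.2 q.2 z.2.

Lemma sum_delta3 (f : gT -> gT -> gT -> (gT * gT) * gT) (F : (gT * gT) * gT -> algC) :
  \sum_p (\sum_(i in K) \sum_(j in K) \sum_(k in K) (p == f i j k)%:R) * F p
  = \sum_(i in K) \sum_(j in K) \sum_(k in K) F (f i j k).
Proof.
transitivity (\sum_p \sum_(i in K) \sum_(j in K) \sum_(k in K) ((p == f i j k)%:R * F p)).
  apply: eq_bigr => p _; rewrite mulr_suml; apply: eq_bigr => i _.
  by rewrite mulr_suml; apply: eq_bigr => j _; rewrite mulr_suml.
rewrite exchange_big; apply: eq_bigr => i _; rewrite exchange_big.
apply: eq_bigr => j _; rewrite exchange_big; apply: eq_bigr => k _.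
rewrite (bigD1 (f i j k)) //= eqxx mul1r big1 ?addr0 // => p /negbTE ->.
by rewrite mul0r.
Qed.

Lemma mulH3_delta (f g : gT -> gT -> gT -> (gT * gT) * gT) (A B : HA3 gT) z :
  (forall p, A p = \sum_(i in K) \sum_(j in K) \sum_(k in K) (p == f i j k)%:R) ->
  (forall q, B q = \sum_(i in K) \sum_(j in K) \sum_(k in K) (q == g i j k)%:R) ->
  mulH3 K M A B z = \sum_(i in K) \sum_(j in K) \sum_(k in K)
     \sum_(i' in K) \sum_(j' in K) \sum_(k' in K) m3 (f i j k) (g i' j' k') z.
Proof.
move=> HA HB; rewrite ffunE.
transitivity (\sum_p A p * \sum_q B q * m3 p q z).
  apply: eq_bigr => p _; rewrite mulr_sumr; apply: eq_bigr => q _.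
  by rewrite /m3 !mulrA.
rewrite (eq_bigr _ (fun p _ => congr1 (fun t => t * _) (HA p))) sum_delta3.
apply: eq_bigr => i _; apply: eq_bigr => j _; apply: eq_bigr => k _.
by rewrite (eq_bigr _ (fun q _ => congr1 (fun t => t * _) (HB q))) sum_delta3.
Qed.

Lemma tr1E p : tens_r1 K (TS K s) p =
  \sum_(a in K) \sum_(b in K) \sum_(c in K) (p == (((a * s b)%g, b), c))%:R.
Proof.
case: p => p1 p2; rewrite !ffunE /= mulr_suml; apply: eq_bigr => a _.
rewrite mulr_suml; apply: eq_bigr => b _.
under eq_bigr => c _ do rewrite xpair_eqE.
rewrite (sum_b (e := p2)); last by move=> i _ /andP[_ /eqP ->].
by rewrite mulRb eqxx andbT andbC.
Qed.

Lemma clE q : comul_l K M (TS K s) q =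
  \sum_(v in K) \sum_(h in K) \sum_(u in K)
     (q == (((u * h^-1 * lact K M h (s v))%g, (h * s v)%g), v))%:R.
Proof.
case: q => q1 q2; rewrite ffunE /= sumT1.
transitivity (\sum_(u in K) \sum_(v in K) \sum_(h in K)
   (((q1, q2) == (((u * h^-1 * lact K M h (s v))%g, (h * s v)%g), v))%:R : algC)).
  apply: eq_bigr => u uK; apply: eq_bigr => v vK.
  rewrite (comulcE uf _ uK (sM vK)) mulr_sumr; apply: eq_bigr => h _.
  by rewrite mulRb xpair_eqE andbC.
rewrite exchange_big; apply: eq_bigr => v _; rewrite exchange_big.
by [].
Qed.

Lemma t1lE p : tens_1l K (TS K s) p =
  \sum_(c in K) \sum_(a in K) \sum_(b in K) (p == ((c, (a * s b)%g), b))%:R.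
Proof.
case: p => [[p11 p12] p2]; rewrite !ffunE /=.
rewrite [RHS]exchange_big; under [RHS]eq_bigr => a _ do rewrite exchange_big.
rewrite mulr_sumr; apply: eq_bigr => a _.
rewrite mulr_sumr; apply: eq_bigr => b _.
rewrite (sum_b (e := p11)); last by move=> i _; rewrite !xpair_eqE => /andP[/andP[/eqP -> _] _].
by rewrite mulRb !xpair_eqE eqxx /= andbA.
Qed.

Lemma crE q : comul_r K M (TS K s) q =
  \sum_(k in K) \sum_(v in K) \sum_(u in K) (q == (((u * s v)%g, (v * k^-1)%g), k))%:R.
Proof.
case: q => [[q11 q12] q2]; rewrite ffunE /= sumT2.
transitivity (\sum_(u in K) \sum_(v in K) \sum_(k in K)
   ((((q11, q12), q2) == (((u * s v)%g, (v * k^-1)%g), k))%:R : algC)).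
  apply: eq_bigr => u uK; apply: eq_bigr => v vK.
  rewrite (comulcE1 uf _ vK) mulr_sumr; apply: eq_bigr => k _.
  by rewrite mulRb !xpair_eqE andbA.
rewrite exchange_big; under eq_bigr => v _ do rewrite exchange_big.
by rewrite exchange_big.
Qed.


Lemma cocL a b c z : a \in K -> b \in K -> c \in K ->
  \sum_(v in K) \sum_(h in K) \sum_(u in K)
    m3 (((a * s b)%g, b), c) (((u * h^-1 * lact K M h (s v))%g, (h * s v)%g), v) z
  = ((((a * s b * lact K M b (s c))%g == z.1.1) && ((b * s c)%g == z.1.2)) && (c == z.2))%:R.
Proof.
move=> aK bK cK; case: z => [[z11 z12] z2] /=.
have [_ rK _] := lr_in uf a (s b).
pose P v h u := ((((ract K M a (s b) == (u * h^-1)%g) &&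
       ((a * s b * lact K M h (s v))%g == z11)) && ((b == h) && ((b * s v)%g == z12)))
       && ((c == v) && (c == z2))).
transitivity (\sum_(v in K) \sum_(h in K) \sum_(u in K) ((P v h u)%:R : algC)).
  apply: eq_bigr => v vK; apply: eq_bigr => h hK; apply: eq_bigr => u uK.
  have [lM _ _] := lr_in uf h (s v).
  rewrite /m3 /= (mulcE uf _ aK (sM bK) (groupM uK (groupVr hK)) lM).
  by rewrite (mulcE_1l uf _ bK hK (sM vK)) (mulcE_11 uf _ cK vK) !mulRb.
transitivity (\sum_(v in K) \sum_(h in K) ((P v h (ract K M a (s b) * h)%g)%:R : algC)).
  apply: eq_bigr => v _; apply: eq_bigr => h hK.
  rewrite (sum_b (e := (ract K M a (s b) * h)%g)); last first.
    by move=> i _ /andP[/andP[/andP[/eqP -> _] _] _]; rewrite mulgVK.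
  by rewrite groupM.
transitivity (\sum_(v in K) ((P v b (ract K M a (s b) * b)%g)%:R : algC)).
  apply: eq_bigr => v _.
  rewrite (sum_b (e := b)); last by move=> i _ /andP[/andP[_ /andP[/eqP ->]]].
  by rewrite bK.
rewrite (sum_b (e := c)); last by move=> i _ /andP[_ /andP[/eqP ->]].
by rewrite cK /P mulgK !eqxx.
Qed.

Lemma cocR c a b z : c \in K -> a \in K -> b \in K ->
  \sum_(k in K) \sum_(v in K) \sum_(u in K)
    m3 ((c, (a * s b)%g), b) (((u * s v)%g, (v * k^-1)%g), k) z
  = ((((c * s (ract K M a (s b) * b))%g == z.1.1) && ((a * s b)%g == z.1.2)) && (b == z.2))%:R.
Proof.
move=> cK aK bK; case: z => [[z11 z12] z2] /=.
have [_ rK _] := lr_in uf a (s b).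
pose P k v u := ((((c == u) && ((c * s v)%g == z11)) &&
       ((ract K M a (s b) == (v * k^-1)%g) && ((a * s b)%g == z12)))
       && ((b == k) && (b == z2))).
transitivity (\sum_(k in K) \sum_(v in K) \sum_(u in K) ((P k v u)%:R : algC)).
  apply: eq_bigr => k kK; apply: eq_bigr => v vK; apply: eq_bigr => u uK.
  rewrite /m3 /= (mulcE_1l uf _ cK uK (sM vK)).
  by rewrite (mulcE_1r uf _ aK (sM bK) (groupM vK (groupVr kK))) (mulcE_11 uf _ bK kK) !mulRb.
transitivity (\sum_(k in K) \sum_(v in K) ((P k v c)%:R : algC)).
  apply: eq_bigr => k _; apply: eq_bigr => v _.
  rewrite (sum_b (e := c)); last by move=> i _ /andP[/andP[/andP[/eqP ->]]].
  by rewrite cK.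
transitivity (\sum_(k in K) ((P k (ract K M a (s b) * k)%g c)%:R : algC)).
  apply: eq_bigr => k kK.
  rewrite (sum_b (e := (ract K M a (s b) * k)%g)); last first.
    by move=> i _ /andP[/andP[_ /andP[/eqP -> _]] _]; rewrite mulgVK.
  by rewrite groupM.
rewrite (sum_b (e := b)); last by move=> i _ /andP[_ /andP[/eqP ->]].
by rewrite bK /P mulgK !eqxx.
Qed.

Lemma cocycleT :
  mulH3 K M (tens_r1 K (TS K s)) (comul_l K M (TS K s)) =
  mulH3 K M (tens_1l K (TS K s)) (comul_r K M (TS K s)).
Proof.
apply/ffunP => z.
rewrite (mulH3_delta _ tr1E clE) (mulH3_delta _ t1lE crE).
apply: eq_bigr => a aK; apply: eq_bigr => b bK; apply: eq_bigr => c cK.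
by rewrite cocL // cocR // -mulgA cocycle.
Qed.

End Main.

Theorem proposition6 (gT : finGroupType) (Gp Gp' Gm : {group gT})
    (sigma : gT -> gT) :
  unique_fact Gp Gm -> unique_fact Gp' Gm ->
  (forall u, u \in Gp -> sigma u \in Gm) ->
  (Gp' : {set gT}) = [set (sigma u * u)%g | u in Gp] ->
  quasi_iso Gp' Gp Gm (phiS Gp Gm sigma) (TS Gp sigma).
Proof.
move=> uf uf' sM eK'.
split.
- split.
  + exact: phi_lin.
  + exact: (phi_bij uf uf' sM eK').
  + exact: (phi_mul uf uf' sM eK').
  + exact: (phi_unit uf uf' eK').
- exists (TS Gp (fun v => (sigma v)^-1)%g); split.
  + apply: (TT uf) => // v vK; first by rewrite groupV sM.
    by rewrite mulgV.
  + apply: (TT uf) => // v vK; first by rewrite groupV sM.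
    by rewrite mulVg.
  + exact: (conjT uf uf' sM eK').
- exact: (cocycleT uf sM eK').
- exact: (counitT uf uf' sM eK').
Qed.
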